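(* Let $\mathbb{X}$ be a finite-dimensional real Banach space. Then $\operatorname{Ext}B_{\mathbb{X}}$ is a $\mathcal{K}$-set: every linear operator $T:\mathbb{X}\to\mathbb{X}$ that preserves Birkhoff–James orthogonality at each extreme point of $B_{\mathbb{X}}$ satisfies $\|Tx\|=\lambda\|x\|$ for all $x\in\mathbb{X}$, for some constant $\lambda\ge0$.
   Context: $u\perp_B v$ means $\|u+\lambda v\|\ge\|u\|$ for all real $\lambda$; $T$ preserves Birkhoff–James orthogonality at $x$ if $x\perp_B w\Rightarrow Tx\perp_B Tw$ for all $w$. $\operatorname{Ext}B_{\mathbb{X}}$ is the set of extreme points of the closed unit ball. A set $A\subseteq S_{\mathbb{X}}$ is a $\mathcal{K}$-set if every bounded linear $T:\mathbb{X}\to\mathbb{X}$ preserving Birkhoff–James orthogonality at each point of $A$ is a scalar multiple of an isometry. *)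

(* Defs.v *)
From HB Require Import structures.
From mathcomp Require Import all_boot all_order all_algebra.
From mathcomp Require Import reals.
Set Implicit Arguments. Unset Strict Implicit. Unset Printing Implicit Defensive.
Import Order.TTheory GRing.Theory Num.Theory.
Local Open Scope ring_scope.

(* A finite-dimensional real Banach space is (isometric to) R^n equipped with
   an arbitrary norm N; we model X as 'rV[R]_n with a norm function N. *)
Definition is_norm (R : realType) (n : nat) (N : 'rV[R]_n -> R) : Prop :=
  [/\ (forall x, 0 <= N x),
      (forall x, N x = 0 -> x = 0),
      (forall (a : R) x, N (a *: x) = `|a| * N x) &
      (forall x y, N (x + y) <= N x + N y)].

Definition bj_orth (R : realType) (n : nat) (N : 'rV[R]_n -> R) (u v : 'rV[R]_n) : Prop :=
  forall l : R, N u <= N (u + l *: v).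

Definition preserves_bj_at (R : realType) (n : nat) (N : 'rV[R]_n -> R)
  (T : 'rV[R]_n -> 'rV[R]_n) (x : 'rV[R]_n) : Prop :=
  forall w, bj_orth N x w -> bj_orth N (T x) (T w).

Definition ext_ball (R : realType) (n : nat) (N : 'rV[R]_n -> R) (x : 'rV[R]_n) : Prop :=
  N x <= 1 /\
  forall (y z : 'rV[R]_n) (t : R), N y <= 1 -> N z <= 1 -> 0 < t -> t < 1 ->
    x = t *: y + (1 - t) *: z -> y = z.

(* Main.v *)
Require Import Defs.
From HB Require Import structures.
From mathcomp Require Import all_boot all_order all_algebra.
From mathcomp Require Import reals.
From mathcomp Require Import all_classical all_reals all_analysis.
From mathcomp Require Import ring lra.
Import Order.TTheory GRing.Theory Num.Theory.
Import numFieldNormedType.Exports.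
Set Implicit Arguments. Unset Strict Implicit. Unset Printing Implicit Defensive.
Local Open Scope ring_scope.
Local Open Scope classical_set_scope.

Section Basics.
Variable R : realType.
Variable n : nat.
Local Notation V := 'rV[R]_n.

Definition seminorm (f : V -> R) :=
  [/\ forall x, 0 <= f x, forall a x, f (a *: x) = `|a| * f x &
      forall x y, f (x + y) <= f x + f y].

Variable f : V -> R.
Hypothesis hf : seminorm f.

Lemma sf_ge0 x : 0 <= f x. Proof. by case: hf. Qed.
Lemma sfZ a x : f (a *: x) = `|a| * f x. Proof. by case: hf. Qed.
Lemma sfD x y : f (x + y) <= f x + f y. Proof. by case: hf. Qed.
Lemma sf0 : f 0 = 0.
Proof. by have := sfZ 0 0; rewrite scale0r normr0 mul0r. Qed.
Lemma sfN x : f (- x) = f x.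
Proof. by rewrite -scaleN1r sfZ normrN normr1 mul1r. Qed.
Lemma sfB x y : `|f x - f y| <= f (x - y).
Proof.
rewrite ler_norml; apply/andP; split.
  have := sfD (y - x) x; rewrite subrK -opprB sfN; lra.
have := sfD (x - y) y; rewrite subrK; lra.
Qed.
Lemma sfsum (F : 'I_n -> V) : f (\sum_(i < n) F i) <= \sum_(i < n) f (F i).
Proof.
elim/big_rec2: _ => [|i y1 y2 _ Hy]; first by rewrite sf0.
by apply: le_trans (sfD _ _) _; rewrite lerD2l.
Qed.
Lemma sfconv t x y : 0 <= t <= 1 -> f (t *: x + (1 - t) *: y) <= t * f x + (1 - t) * f y.
Proof.
move=> /andP[t0 t1]; apply: le_trans (sfD _ _) _.
by rewrite !sfZ ger0_norm // ger0_norm // subr_ge0.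
Qed.

Definition dot (x y : V) := \sum_(j < n) x 0 j * y 0 j.
Lemma dotDZl a x y z : dot (a *: x + y) z = a * dot x z + dot y z.
Proof.
rewrite /dot mulr_sumr -big_split; apply: eq_bigr => j _; rewrite !mxE.
by rewrite mulrDl mulrA.
Qed.
Lemma dotC x y : dot x y = dot y x.
Proof. by apply: eq_bigr => j _; rewrite mulrC. Qed.
Lemma dot0l z : dot 0 z = 0.
Proof. by rewrite /dot big1 // => j _; rewrite mxE mul0r. Qed.
Lemma dotZl a x z : dot (a *: x) z = a * dot x z.
Proof. by have := dotDZl a x 0 z; rewrite addr0 dot0l addr0. Qed.
Lemma dotDl x y z : dot (x + y) z = dot x z + dot y z.
Proof. by rewrite -[x]scale1r dotDZl mul1r scale1r. Qed.
Lemma dotNl x z : dot (- x) z = - dot x z.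
Proof. by rewrite -scaleN1r dotZl mulN1r. Qed.
Lemma dotBl x y z : dot (x - y) z = dot x z - dot y z.
Proof. by rewrite dotDl dotNl. Qed.
Lemma dotZr a x z : dot x (a *: z) = a * dot x z.
Proof. by rewrite dotC dotZl dotC. Qed.
Lemma dotDr x y z : dot z (x + y) = dot z x + dot z y.
Proof. by rewrite dotC dotDl !(dotC z). Qed.
Lemma dotBr x y z : dot z (x - y) = dot z x - dot z y.
Proof. by rewrite dotC dotBl !(dotC z). Qed.
Lemma dotxx_ge0 x : 0 <= dot x x.
Proof. by apply: sumr_ge0 => j _; rewrite -expr2 sqr_ge0. Qed.
Lemma dotxx_eq0 x : dot x x = 0 -> x = 0.
Proof.
move=> /eqP; rewrite psumr_eq0; last by move=> j _; rewrite -expr2 sqr_ge0.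
move=> /allP H; apply/rowP => j; rewrite mxE.
by have /(_ (mem_index_enum j)) := H j; rewrite -expr2 sqrf_eq0 => /eqP.
Qed.
Lemma coord_le_dot (x : V) i : x 0 i ^+ 2 <= dot x x.
Proof.
rewrite /dot (bigD1 i) //= expr2 lerDl.
by apply: sumr_ge0 => j _; rewrite -expr2 sqr_ge0.
Qed.

Definition en (x : V) := Num.sqrt (dot x x).
Lemma coord_le_en (x : V) i : `|x 0 i| <= en x.
Proof. by rewrite -sqrtr_sqr ler_sqrt ?dotxx_ge0 // coord_le_dot. Qed.

Lemma coord_le_mx (x : V) i : `|x 0 i| <= `|x|.
Proof.
rewrite [leRHS]/Num.Def.normr /= mx_normrE; apply/bigmax_geP; right => /=.
by exists (0, i).
Qed.


Lemma sf_le_mx (x : V) : f x <= (\sum_(j < n) f 'e_j) * `|x|.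
Proof.
rewrite {1}(row_sum_delta x); apply: le_trans (sfsum _) _.
rewrite mulr_suml; apply: ler_sum => j _; rewrite sfZ mulrC ler_wpM2l ?sf_ge0 //.
exact: coord_le_mx.
Qed.
Lemma sf_le_en (x : V) : f x <= (\sum_(j < n) f 'e_j) * en x.
Proof.
rewrite {1}(row_sum_delta x); apply: le_trans (sfsum _) _.
rewrite mulr_suml; apply: ler_sum => j _; rewrite sfZ mulrC ler_wpM2l ?sf_ge0 //.
exact: coord_le_en.
Qed.
End Basics.

Section Topo.
Variable R : realType.
Variable n : nat.
Local Notation V := 'rV[R]_n.

Lemma loclip_cont (f : V -> R) :
  (forall x, exists K, 0 < K /\ forall y, `|y - x| <= 1 -> `|f y - f x| <= K * `|y - x|) ->
  continuous f.
Proof.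
move=> H x; have [K [K0 HK]] := H x.
apply/(@cvgrPdist_le _ _ _ (nbhs x) (nbhs_filter x)) => e e0.
rewrite -(@nbhs_nbhs_norm R V); exists (Num.min 1 (e / K)) => /=.
  by rewrite lt_min ltr01 divr_gt0.
move=> y /=; rewrite lt_min => /andP[h1 h2].
have h3 : `|f y - f x| <= K * `|y - x| by apply: HK; rewrite distrC ltW.
rewrite distrC; apply: le_trans h3 _.
by rewrite -ler_pdivlMl // mulrC distrC ltW.
Qed.
End Topo.

Section Topo2.
Variable R : realType.
Variable n : nat.
Local Notation V := 'rV[R]_n.

Lemma sf_cont (f : V -> R) : seminorm f -> continuous f.
Proof.
move=> hf; apply: loclip_cont => x.
exists ((\sum_(j < n) f 'e_j) + 1); split.
  by apply: ltr_wpDl => //; apply: sumr_ge0 => j _; exact: sf_ge0.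
move=> y _; apply: le_trans (sfB hf y x) _; apply: le_trans (sf_le_mx hf _) _.
by rewrite ler_wpM2r // lerDl.
Qed.

Lemma dot_bound (z w : V) : `|dot z w| <= n%:R * `|z| * `|w|.
Proof.
apply: le_trans (ler_norm_sum _ _ _) _.
have -> : n%:R = \sum_(j < n) (1 : R) by rewrite sumr_const card_ord.
rewrite -mulrA mulr_suml; apply: ler_sum => j _; rewrite normrM mul1r.
by apply: ler_pM => //; apply: coord_le_mx.
Qed.

Lemma quad_cont (p : V) : continuous (fun x : V => dot (x - p) (x - p)).
Proof.
apply: loclip_cont => x.
exists (n%:R * (`|x - p| * 2 + 1) + 1); split.
  by apply: ltr_wpDl => //; apply: mulr_ge0 => //; apply: addr_ge0 => //; apply: mulr_ge0.
move=> y hy.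
have -> : dot (y - p) (y - p) - dot (x - p) (x - p) = dot (y - x) ((y - p) + (x - p)).
  rewrite !(dotBl, dotBr, dotDr, dotDl) (dotC x y) (dotC p y) (dotC p x); ring.
apply: le_trans (dot_bound _ _) _.
rewrite mulrAC ler_wpM2r //.
have h : `|(y - p) + (x - p)| <= `|x - p| * 2 + 1.
  have -> : (y - p) + (x - p) = (y - x) + (x - p) *+ 2.
    by rewrite mulr2n; apply/rowP => j; rewrite !mxE /=; ring.
  apply: le_trans (ler_normD _ _) _; rewrite normrMn mulr_natr addrC lerD2l distrC.
  by rewrite distrC.
apply: le_trans (ler_wpM2l _ h) _ => //.
by rewrite lerDl.
Qed.

Lemma dotl_cont (c : V) : continuous (fun x : V => dot x c).
Proof.
apply: loclip_cont => x.
exists (n%:R * `|c| + 1); split.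
  by apply: ltr_wpDl => //; apply: mulr_ge0.
move=> y _; rewrite -dotBl; apply: le_trans (dot_bound _ _) _.
by rewrite mulrAC ler_wpM2r // lerDl.
Qed.

Lemma evt_max (A : set V) (f : V -> R) : compact A -> A !=set0 -> continuous f ->
  exists2 c, A c & forall x, A x -> f x <= f c.
Proof.
move=> cA A0 cf.
have [c cA' H] := compact_EVT_max A0 cA (continuous_subspaceT cf).
by exists c; [rewrite inE in cA'|move=> x Ax; apply: H; rewrite inE].
Qed.

Lemma evt_min (A : set V) (f : V -> R) : compact A -> A !=set0 -> continuous f ->
  exists2 c, A c & forall x, A x -> f c <= f x.
Proof.
move=> cA A0 cf.
have [c cA' H] := compact_EVT_min A0 cA (continuous_subspaceT cf).
by exists c; [rewrite inE in cA'|move=> x Ax; apply: H; rewrite inE].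
Qed.

Lemma closed_preimage_eq (f : V -> R) r : continuous f -> closed [set x | f x = r].
Proof.
move=> cf; have -> : [set x | f x = r] = f @^-1` [set y | y = r] by [].
by apply: preimage_closed; [move=> x _; exact: cf| exact: closed_eq].
Qed.

Lemma closed_preimage_le (f : V -> R) r : continuous f -> closed [set x | f x <= r].
Proof.
move=> cf; have -> : [set x | f x <= r] = f @^-1` [set y | y <= r] by [].
by apply: preimage_closed; [move=> x _; exact: cf| exact: closed_le].
Qed.

Lemma bounded_by (A : set V) K : (forall x, A x -> `|x| <= K) -> compact [set x | A x] \/ True.
Proof. by right. Qed.

Lemma closed_bounded_compact (A : set V) K : closed A -> (forall x, A x -> `|x| <= K) -> compact A.
Proof.
move=> cA HK; apply: bounded_closed_compact => //.
exists K; split; first exact: num_real.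
move=> M hM x Ax /=; apply: le_trans (HK x Ax) _; exact: ltW.
Qed.

End Topo2.

Section Main.
Variable R : realType.
Variable n : nat.
Local Notation V := 'rV[R]_n.
Variable N : V -> R.
Hypothesis hN : is_norm N.
Variable T : {linear V -> V}.
Hypothesis hT : forall x, ext_ball N x -> preserves_bj_at N T x.

Local Notation h := (fun x => N (T x)).

Lemma N_semi : seminorm N.
Proof. by case: hN. Qed.
Lemma N_eq0 x : N x = 0 -> x = 0.
Proof. by case: hN => _ H _ _; apply: H. Qed.
Lemma h_semi : seminorm (fun x => N (T x)).
Proof.
split.
- by move=> x; apply: sf_ge0 N_semi _.
- by move=> a x; rewrite linearZ (sfZ N_semi).
- by move=> x y; rewrite linearD (sfD N_semi).
Qed.

Lemma N_pos x : x != 0 -> 0 < N x.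
Proof.
move=> x0; rewrite lt_def (sf_ge0 N_semi) // andbT.
by apply/eqP => /N_eq0 /eqP; rewrite (negbTE x0).
Qed.

Lemma N_normalize x : x != 0 -> N ((N x)^-1 *: x) = 1.
Proof.
move=> x0; rewrite (sfZ N_semi) // ger0_norm ?invr_ge0 ?(sf_ge0 N_semi) //.
by rewrite mulVf // gt_eqF // N_pos.
Qed.

Lemma mx_le_N : exists K, 0 < K /\ forall x : V, `|x| <= K * N x.
Proof.
have [[u1 hu1]|nS] := pselect (exists u : V, `|u| = 1); last first.
  exists 1; split => // x; have [->|x0] := eqVneq x 0.
    by rewrite normr0 mul1r (sf_ge0 N_semi).
  exfalso; apply: nS; exists (`|x|^-1 *: x).
  by rewrite normrZ normrV ?unitfE ?normr_eq0 // normr_id mulVf // normr_eq0.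
pose S := [set x : V | `|x| = 1].
have cS : compact S.
  apply: (@closed_bounded_compact _ _ _ 1); last by move=> x ->.
  exact: closed_preimage_eq norm_continuous.
have [u Su Hu] := evt_min cS (ex_intro _ u1 hu1) (sf_cont N_semi).
have u0 : u != 0 by apply/eqP => u0; move: Su; rewrite /S /= u0 normr0 => /eqP; rewrite eq_sym oner_eq0.
have Nu := N_pos u0.
exists (N u)^-1; split; first by rewrite invr_gt0.
move=> x; have [->|x0] := eqVneq x 0; first by rewrite normr0 (sf0 N_semi) // mulr0.
have nx : 0 < `|x| by rewrite normr_gt0.
have := Hu (`|x|^-1 *: x).
rewrite (sfZ N_semi) // normrV ?unitfE ?normr_eq0 // normr_id.
move=> /(_ _); rewrite /S /= normrZ normrV ?unitfE ?normr_eq0 // normr_id mulVf ?normr_eq0 // => /(_ erefl).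
rewrite ler_pdivlMl // => H.
by rewrite mulrC ler_pdivlMr.
Qed.

Definition B := [set x : V | N x <= 1].

Lemma B_compact : compact B.
Proof.
have [K [K0 HK]] := mx_le_N.
apply: (@closed_bounded_compact _ _ _ K).
  exact: closed_preimage_le (sf_cont N_semi).
by move=> x Bx; apply: le_trans (HK x) _; rewrite -[leRHS]mulr1 ler_wpM2l // ltW.
Qed.

Lemma func_bound (c : V) m : (forall x, N x <= 1 -> dot x c <= m) -> forall x, dot x c <= m * N x.
Proof.
move=> H x; have [->|x0] := eqVneq x 0; first by rewrite dot0l (sf0 N_semi) // mulr0.
have := H ((N x)^-1 *: x); rewrite N_normalize // lexx => /(_ isT); rewrite dotZl ler_pdivrMl ?N_pos //.
by rewrite mulrC.
Qed.

Lemma exists_pos (c : V) : c != 0 -> exists x, N x <= 1 /\ 0 < dot x c.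
Proof.
move=> c0; exists ((N c)^-1 *: c); rewrite N_normalize //; split => //.
rewrite dotZl mulr_gt0 ?invr_gt0 ?N_pos // lt_def dotxx_ge0 andbT.
by apply/eqP => /dotxx_eq0 /eqP; rewrite (negbTE c0).
Qed.

Definition Good (c e : V) := [/\ N e <= 1, (forall x, N x <= 1 -> dot x c <= dot e c),
   ext_ball N e & (forall x, N x <= 1 -> dot x c = dot e c -> N (T x) <= N (T e))].

Lemma quad_split (t : R) (y z : V) :
  dot (t *: y + (1 - t) *: z) (t *: y + (1 - t) *: z) =
  t * dot y y + (1 - t) * dot z z - t * (1 - t) * dot (y - z) (y - z).
Proof.
rewrite dotBl !dotBr !(dotDl, dotDr, dotZl, dotZr) (dotC z y); ring.
Qed.

Lemma good_exists (c : V) : exists e, Good c e.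
Proof.
have B0 : B !=set0 by exists 0; rewrite /B /= (sf0 N_semi).
have [e1 Be1 He1] := evt_max B_compact B0 (dotl_cont (c:=c)).
pose F := B `&` [set x | dot x c = dot e1 c].
have cF : compact F := compact_closedI B_compact (closed_preimage_eq (dotl_cont (c:=c))).
have [e2 Fe2 He2] := evt_max cF (ex_intro _ e1 (conj Be1 erefl)) (sf_cont h_semi).
pose A := F `&` [set x | N (T x) = N (T e2)].
have cA : compact A := compact_closedI cF (closed_preimage_eq (sf_cont h_semi)).
have [e [[Be Fe] Ae] He] := evt_max cA (ex_intro _ e2 (conj Fe2 erefl)) (quad_cont (p:=0)).
rewrite /= in Fe Ae; rewrite /B /= in Be.
exists e; split => //.
- by move=> x Bx; rewrite Fe; apply: He1.
- split => // y z t Ny Nz t0 t1 ey.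
  have hy := He1 y Ny; have hz := He1 z Nz.
  have ed : dot e c = t * dot y c + (1 - t) * dot z c by rewrite ey dotDl !dotZl.
  have dy : dot y c = dot e1 c by nra.
  have dz : dot z c = dot e1 c by nra.
  have hy' := He2 y (conj Ny dy); have hz' := He2 z (conj Nz dz).
  have hc : N (T e) <= t * N (T y) + (1 - t) * N (T z).
    by rewrite ey; have := sfconv h_semi (t:=t) y z; apply; rewrite !ltW.
  have ay : N (T y) = N (T e2) by rewrite /= in hy' hz'; nra.
  have az : N (T z) = N (T e2) by rewrite /= in hy' hz'; nra.
  have qy := He y (conj (conj Ny dy) ay); have qz := He z (conj (conj Nz dz) az).
  rewrite /= !subr0 in qy qz.
  have qe := quad_split t y z; rewrite -ey in qe.
  have q0 := dotxx_ge0 (y - z).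
  have : dot (y - z) (y - z) = 0.
    have h1 : t * dot y y <= t * dot e e by rewrite ler_pM2l.
    have h2 : (1-t) * dot z z <= (1-t) * dot e e by rewrite ler_pM2l // subr_gt0.
    have tt : 0 < t * (1 - t) by rewrite mulr_gt0 // subr_gt0.
    have h3 : t * (1-t) * dot (y - z) (y - z) <= 0 by lra.
    by apply/le_anti; rewrite q0 andbT -(pmulr_rle0 _ tt).
  by move/dotxx_eq0/eqP; rewrite subr_eq0 => /eqP.
- move=> x Bx dx; rewrite Ae; apply: He2; split => //; by rewrite /= dx Fe.
Qed.
End Main.

Lemma chain_real (R : realType) (k : nat) (hh d : nat -> R) (mu : R) : 0 < mu ->
  (forall i, 0 <= hh i) -> (forall i, 0 <= d i) ->
  (forall i, (i < k)%N -> hh i * (1 - d i / mu) <= hh i.+1) ->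
  hh 0%N * (1 - (\sum_(i < k) d i) / mu) <= hh k.
Proof.
move=> mu0 hh0 d0; elim: k => [|k IH] H.
  by rewrite big_ord0 mul0r subr0 mulr1.
have IH' := IH (fun i hi => H i (ltnW hi)).
have Hk := H k (ltnSn k).
rewrite big_ord_recr /=.
set S := \sum_(i < k) d i in IH' *.
have S0 : 0 <= S by apply: sumr_ge0.
have x0 : 0 <= S / mu by rewrite divr_ge0 // ltW.
have y0 : 0 <= d k / mu by rewrite divr_ge0 // ltW.
have -> : (S + d k) / mu = S / mu + d k / mu by rewrite mulrDl.
move: IH' Hk; set x := S / mu; set y := d k / mu => IH' Hk.
have := hh0 0%N; have := hh0 k; have := hh0 k.+1 => a b c.
have [y1|y1] := lerP y 1.
  apply: le_trans Hk.
  have h1 : hh 0%N * (1 - x) * (1 - y) <= hh k * (1 - y) by rewrite ler_wpM2r // subr_ge0.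
  have h2 : 0 <= hh 0%N * x * y by rewrite mulr_ge0 // mulr_ge0.
  apply: le_trans h1; rewrite -subr_ge0; have -> : hh 0%N * (1 - x) * (1 - y) - hh 0%N * (1 - (x + y)) = hh 0%N * x * y by ring.
  done.
apply: le_trans a; apply: mulr_ge0_le0 => //.
rewrite /x /y in y1 *; lra.
Qed.

Lemma small_le0 (R : realType) (x K : R) : 0 <= K ->
  (forall eps, 0 < eps -> x <= eps * K) -> x <= 0.
Proof.
move=> K0 H; rewrite leNgt; apply/negP => x0.
have := H (x / (K + 1)) (divr_gt0 x0 (ltr_wpDl K0 ltr01)).
rewrite mulrAC ler_pdivlMr ?(ltr_wpDl K0 ltr01) //; nra.
Qed.

Section Main2.
Variable R : realType.
Variable n : nat.
Local Notation V := 'rV[R]_n.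
Variable N : V -> R.
Hypothesis hN : is_norm N.
Variable T : {linear V -> V}.
Hypothesis hT : forall x, ext_ball N x -> preserves_bj_at N T x.

Lemma Good_pos c e : Good N T c e -> c != 0 -> 0 < dot e c.
Proof.
case=> Be Hmax _ _ c0; have [x0 [Bx0 px0]] := exists_pos hN c0.
exact: lt_le_trans px0 (Hmax _ Bx0).
Qed.

Lemma keyL c e : Good N T c e -> c != 0 ->
  forall z, N (T e) * dot z c <= N (T z) * dot e c.
Proof.
move=> G c0 z; have m0 := Good_pos G c0.
case: G => Be Hmax ext Hface.
have fb := func_bound hN Hmax.
have hTe : 0 <= N (T e) := sf_ge0 (N_semi hN) _.
have hTz : 0 <= N (T z) := sf_ge0 (N_semi hN) _.
have [zc|zc] := lerP (dot z c) 0.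
  apply: (@le_trans _ _ 0); first by apply: mulr_ge0_le0.
  by apply: mulr_ge0 => //; apply: ltW.
pose w := (dot e c / dot z c) *: z - e.
have wc : dot w c = 0.
  by rewrite /w dotBl dotZl mulrAC -mulrA divff ?gt_eqF // mulr1 subrr.
have orth : bj_orth N e w.
  move=> l; apply: le_trans Be _.
  have := fb (e + l *: w); rewrite dotDl dotZl wc mulr0 addr0.
  by move=> H; rewrite -(ler_pM2l m0) mulr1.
have := hT ext orth 1; rewrite scale1r -linearD /w addrC subrK linearZ.
rewrite (sfZ (N_semi hN)) ger0_norm; last by rewrite divr_ge0 // ltW.
have -> : dot e c / dot z c * N (T z) = N (T z) * dot e c / dot z c by ring.
by rewrite ler_pdivlMr.
Qed.

Lemma good_face c e e' : Good N T c e -> Good N T c e' -> N (T e) = N (T e').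
Proof.
case=> Be He _ Fe; case=> Be' He' _ Fe'.
have d : dot e c = dot e' c by apply/le_anti; rewrite He' // He.
by apply/le_anti; rewrite Fe' // Fe.
Qed.

Lemma dotNr (x c : V) : dot x (- c) = - dot x c.
Proof. by rewrite dotC dotNl dotC. Qed.

Lemma hN_neg x : N (T (- x)) = N (T x).
Proof. by rewrite linearN (sfN (N_semi hN)). Qed.

Lemma good_neg c e : Good N T c e -> Good N T (- c) (- e).
Proof.
case=> Be He [_ ext] Fe; split.
- by rewrite (sfN (N_semi hN)).
- move=> x Bx; rewrite !dotNr dotNl opprK -dotNl; apply: He.
  by rewrite (sfN (N_semi hN)).
- split; first by rewrite (sfN (N_semi hN)).
  move=> y z t Ny Nz t0 t1 ey.
  have : - y = - z.
    apply: (ext (- y) (- z) t); rewrite ?(sfN (N_semi hN)) //.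
    by rewrite !scalerN -opprD -ey opprK.
  by move/oppr_inj.
- move=> x Bx; rewrite !dotNr dotNl opprK => dx.
  rewrite hN_neg -(hN_neg x); apply: Fe; first by rewrite (sfN (N_semi hN)).
  by rewrite dotNl.
Qed.
End Main2.

Section Main3.
Variable R : realType.
Variable n : nat.
Local Notation V := 'rV[R]_n.
Variable N : V -> R.
Hypothesis hN : is_norm N.
Variable T : {linear V -> V}.
Hypothesis hT : forall x, ext_ball N x -> preserves_bj_at N T x.
Variable E : V -> V.
Hypothesis HE : forall c, Good N T c (E c).

Lemma dot0r (x : V) : dot x 0 = 0.
Proof. by rewrite dotC dot0l. Qed.
Lemma dotZr' a (x c : V) : dot x (a *: c) = a * dot x c.
Proof. by rewrite dotC dotZl dotC. Qed.

Lemma chain_k (a b v : V) (k : nat) : 0 < dot v a -> 0 < dot v b -> (0 < k)%N ->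
  N (T (E a)) * (1 - (2 * (n%:R * (projT1 (cid (mx_le_N hN))) * `|b - a|) / k%:R) /
      (Num.min (dot v a) (dot v b) / N v)) <= N (T (E b)).
Proof.
move=> va vb k0.
set K := projT1 _; have [K0 HK] := projT2 (cid (mx_le_N hN)); rewrite -/K in K0 HK.
set S := n%:R * K * `|b - a|.
set mu := Num.min (dot v a) (dot v b) / N v.
have v0 : v != 0 by apply/eqP => v0; move: va; rewrite v0 dot0l ltxx.
have Nv := N_pos hN v0.
have mu0 : 0 < mu by rewrite divr_gt0 // lt_min va vb.
have S0 : 0 <= S by rewrite mulr_ge0 // mulr_ge0 // ltW.
have sb x : N x <= 1 -> `|dot x (b - a)| <= S.
  move=> Nx; apply: le_trans (dot_bound _ _) _; rewrite /S ler_wpM2r // ler_wpM2l //.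
  by apply: le_trans (HK x) _; rewrite -[leRHS]mulr1 ler_wpM2l // ltW.
have k0' : 0 < k%:R :> R by rewrite ltr0n.
pose c (i : nat) := a + (i%:R / k%:R) *: (b - a).
have c0 : c 0%N = a by rewrite /c mul0r scale0r addr0.
have ck : c k = b by rewrite /c divff ?gt_eqF // scale1r addrC subrK.
have cS i : c i.+1 = c i + k%:R^-1 *: (b - a).
  by rewrite /c -addrA -scalerDl -natr1 mulrDl mul1r.
have GB x : N (E x) <= 1 by case: (HE x).
have Gmax x y : N y <= 1 -> dot y x <= dot (E x) x by case: (HE x) => _ H _ _; apply: H.
have cpos i : (i <= k)%N -> mu <= dot (E (c i)) (c i).
  move=> ik; set x0 := (N v)^-1 *: v.
  have Bx0 : N x0 <= 1 by rewrite N_normalize.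
  apply: le_trans (Gmax _ _ Bx0); rewrite /x0 dotZl /mu mulrC; apply: ler_wpM2l; first by rewrite invr_ge0 ltW.
  rewrite /c dotDr dotZr' dotBr.
  have s0 : 0 <= i%:R / k%:R :> R by rewrite divr_ge0.
  have s1 : i%:R / k%:R <= 1 :> R by rewrite ler_pdivrMr // mul1r ler_nat.
  set s := i%:R / k%:R in s0 s1 *; set m := Num.min _ _.
  have mA : m <= dot v a by rewrite ge_min lexx.
  have mB : m <= dot v b by rewrite ge_min lexx orbT.
  nra.
pose hh i := N (T (E (c i))).
pose d i := dot (E (c i)) (c i) - dot (E (c i.+1)) (c i).
pose s i := dot (E (c i)) (b - a).
have d0 i : 0 <= d i by rewrite subr_ge0; apply: Gmax.
have hh0 i : 0 <= hh i by apply: (sf_ge0 (N_semi hN)).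
have cn0 i : (i <= k)%N -> c i != 0.
  by move=> ik; apply/eqP => h; have := cpos i ik; rewrite h dot0r leNgt mu0.
have step i : (i < k)%N -> hh i * (1 - d i / mu) <= hh i.+1.
  move=> ik; have mi := cpos i (ltnW ik).
  have L := keyL hN hT (HE (c i)) (cn0 i (ltnW ik)) (E (c i.+1)).
  set m := dot (E (c i)) (c i) in mi L.
  have mpos : 0 < m by apply: lt_le_trans mi.
  have Ld : dot (E (c i.+1)) (c i) = m - d i by rewrite /d /m; ring.
  rewrite Ld -/(hh i) -/(hh i.+1) in L.
  rewrite -(ler_pM2r mpos).
  have r1 : 1 <= m / mu by rewrite ler_pdivlMr // mul1r.
  have -> : hh i * (1 - d i / mu) * m = hh i * (m - d i * (m / mu)) by ring.
  apply: le_trans L; apply: ler_wpM2l => //; rewrite lerB //.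
  by rewrite -{1}[d i]mulr1 ler_wpM2l.
have dle i : (i < k)%N -> d i <= (s i.+1 - s i) / k%:R.
  move=> ik; rewrite /d /s; set y := E (c i.+1); set x := E (c i).
  have h1 := Gmax (c i.+1) x (GB _).
  rewrite -/y {1}cS dotDr dotZr' in h1.
  have h2 : dot y (c i) = dot y (c i.+1) - k%:R^-1 * dot y (b - a).
    by rewrite cS dotDr dotZr'; ring.
  rewrite h2; lra.
have sumle : \sum_(i < k) d i <= (s k - s 0%N) / k%:R.
  apply: (@le_trans _ _ (\sum_(i < k) ((s i.+1 - s i) / k%:R))).
    by apply: ler_sum => i _; apply: dle.
  by rewrite -mulr_suml -(big_mkord xpredT (fun i => s i.+1 - s i)) telescope_sumr.
have sk : (s k - s 0%N) / k%:R <= 2 * S / k%:R.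
  rewrite ler_pM2r ?invr_gt0 //.
  have := sb _ (GB (c k)); have := sb _ (GB (c 0%N)); rewrite !ler_norml /s.
  move=> /andP[u2 _] /andP[_ u1]; lra.
have := chain_real mu0 hh0 d0 step.
rewrite /hh c0 ck; apply: le_trans; apply: ler_wpM2l => //.
  exact: (sf_ge0 (N_semi hN)).
rewrite lerD2l lerN2; apply: ler_wpM2r; first by rewrite invr_ge0 ltW.
exact: le_trans sumle sk.
Qed.

Lemma chain (a b v : V) : 0 < dot v a -> 0 < dot v b -> N (T (E a)) <= N (T (E b)).
Proof.
move=> va vb.
have := @chain_k a b v; set K := projT1 _.
have [K0 _] := projT2 (cid (mx_le_N hN)); rewrite -/K in K0.
set S := n%:R * K * `|b - a|; set mu := Num.min _ _ / N v => Hk.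
have v0 : v != 0 by apply/eqP => v0; move: va; rewrite v0 dot0l ltxx.
have Nv := N_pos hN v0.
have mu0 : 0 < mu by rewrite divr_gt0 // lt_min va vb.
have S0 : 0 <= S by rewrite mulr_ge0 // mulr_ge0 // ltW.
set X := N (T (E a)) in Hk *; set Y := N (T (E b)) in Hk *.
have X0 : 0 <= X by apply: (sf_ge0 (N_semi hN)).
rewrite -subr_le0; apply: (@small_le0 _ _ (X * (2 * S) / mu)).
  by apply: divr_ge0; [apply: mulr_ge0 => //; apply: mulr_ge0 | exact: ltW].
move=> eps eps0; pose k := (Num.Def.archi_bound eps^-1).+1.
have := Hk k va vb (ltn0Sn _).
have kb : eps^-1 < k%:R.
  rewrite /k -natr1; apply: lt_le_trans (archi_boundP _) _; first by rewrite invr_ge0 ltW.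
  by rewrite lerDl.
have k0 : 0 < k%:R :> R by rewrite ltr0n.
have ki : k%:R^-1 <= eps.
  rewrite -(ltr_pM2l eps0) mulfV ?gt_eqF // in kb.
  by rewrite -[k%:R^-1]mul1r ler_pdivrMr // ltW.
have -> : X * (1 - 2 * S / k%:R / mu) = X - (X * (2 * S) / mu) * k%:R^-1 by ring.
move=> H; have Z0 : 0 <= X * (2 * S) / mu by apply: divr_ge0; [apply: mulr_ge0 => //; apply: mulr_ge0 | exact: ltW].
have : X * (2 * S) / mu * k%:R^-1 <= eps * (X * (2 * S) / mu) by rewrite mulrC ler_wpM2r.
lra.
Qed.
End Main3.

Section Var.
Variable R : realType.
Variable n : nat.
Local Notation V := 'rV[R]_n.
Variable N : V -> R.
Hypothesis hN : is_norm N.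

Lemma quad_exp (u w : V) t :
  dot (u + t *: w) (u + t *: w) = dot u u + 2 * t * dot u w + t * t * dot w w.
Proof. rewrite !(dotDl, dotDr, dotZl, dotZr) (dotC w u); ring. Qed.

Lemma variational (p q : V) : N q <= 1 ->
  (forall x, N x <= 1 -> dot (q - p) (q - p) <= dot (x - p) (x - p)) ->
  forall x, N x <= 1 -> dot x (p - q) <= dot q (p - q).
Proof.
move=> Bq Hq x Bx.
set D := dot (x - q) (x - q); set al := dot (x - q) (p - q).
suff : al <= 0 by rewrite /al dotBl subr_le0.
have D0 : 0 <= D := dotxx_ge0 _.
have key t : 0 < t -> t <= 1 -> 2 * al <= t * D.
  move=> t0 t1; pose y := q + t *: (x - q).
  have By : N y <= 1.
    have -> : y = t *: x + (1 - t) *: q.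
      by rewrite /y scalerBr scalerBl scale1r; apply/rowP => j; rewrite !mxE /=; ring.
    apply: le_trans (sfconv (N_semi hN) (t:=t) x q _) _; first by rewrite ltW.
    nra.
  have := Hq y By.
  have -> : y - p = (q - p) + t *: (x - q) by rewrite /y addrAC.
  rewrite quad_exp.
  have -> : dot (q - p) (x - q) = - al by rewrite /al dotC -dotNr opprB.
  rewrite -/D => H.
  have : t * (2 * al) <= t * (t * D) by nra.
  by rewrite ler_pM2l.
rewrite leNgt; apply/negP => al0.
have Dal : 0 < D + al by lra.
have := key (al / (D + al)) (divr_gt0 al0 Dal).
rewrite ler_pdivrMr // mul1r lerDr D0 => /(_ isT) H.
have := ler_wpM2r (ltW Dal) H.
have -> : al / (D + al) * D * (D + al) = al * D * ((D + al) / (D + al)) by ring.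
rewrite divff ?gt_eqF // mulr1 => H2.
nra.
Qed.
End Var.

Section Final.
Variable R : realType.
Variable n : nat.
Local Notation V := 'rV[R]_n.
Variable N : V -> R.
Hypothesis hN : is_norm N.
Variable T : {linear V -> V}.
Hypothesis hT : forall x, ext_ball N x -> preserves_bj_at N T x.
Variable E : V -> V.
Hypothesis HE : forall c, Good N T c (E c).

Lemma dotxx_pos (a : V) : a != 0 -> 0 < dot a a.
Proof.
move=> a0; rewrite lt_def dotxx_ge0 andbT.
by apply/eqP => /dotxx_eq0 /eqP; rewrite (negbTE a0).
Qed.

Lemma Heq (a b : V) : a != 0 -> b != 0 -> 0 <= dot a b -> N (T (E a)) = N (T (E b)).
Proof.
move=> a0 b0 ab.
have va : 0 < dot (a + b) a by rewrite dotDl (dotC b a); have := dotxx_pos a0; lra.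
have vb : 0 < dot (a + b) b by rewrite dotDl; have := dotxx_pos b0; lra.
by apply/le_anti; rewrite (chain hN hT HE va vb) (chain hN hT HE vb va).
Qed.

Lemma hconst (c0 c : V) : c0 != 0 -> c != 0 -> N (T (E c)) = N (T (E c0)).
Proof.
move=> c00 c1; have [h|h] := lerP 0 (dot c0 c); first by rewrite (Heq c00 c1 h).
have c1' : - c != 0 by rewrite oppr_eq0.
have h' : 0 <= dot c0 (- c) by rewrite dotNr; lra.
rewrite (Heq c00 c1' h') (good_face (HE (- c)) (good_neg hN (HE c))).
by rewrite hN_neg.
Qed.

Lemma unit_case (c0 z : V) : c0 != 0 -> N z = 1 -> N (T z) = N (T (E c0)).
Proof.
move=> c00 Nz; set lam := N (T (E c0)).
have hs : seminorm (fun x => N (T x)) := h_semi hN T.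
set C := \sum_(j < n) N (T 'e_j).
have C0 : 0 <= C by apply: sumr_ge0 => j _; apply: (sf_ge0 hs).
suff : `|N (T z) - lam| <= 0 by rewrite normr_le0 subr_eq0 => /eqP.
apply: (@small_le0 _ _ (2 * C * en z)).
  by apply: mulr_ge0; [apply: mulr_ge0|apply: sqrtr_ge0].
move=> eps eps0; pose p := (1 + eps) *: z.
have B0 : B N !=set0 by exists 0; rewrite /B /= (sf0 (N_semi hN)).
have [q Bq Hq] := evt_min (B_compact hN) B0 (quad_cont (p:=p)).
rewrite /B /= in Bq Hq.
set c := p - q.
have cn0 : c != 0.
  apply/eqP => /eqP; rewrite subr_eq0 => /eqP pq.
  move: Bq; rewrite -pq /p (sfZ (N_semi hN)) Nz mulr1 ger0_norm; lra.
have var := variational hN Bq Hq.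
case: (HE c) => Be Hmax _ Hface.
have dqe : dot q c = dot (E c) c by apply/le_anti; rewrite Hmax // var.
have L := keyL hN hT (HE c) cn0 q.
have pos := Good_pos hN (HE c) cn0.
have Tq : N (T q) = lam.
  rewrite /lam -(hconst c00 cn0); apply/le_anti; rewrite Hface //=.
  by rewrite dqe ler_pM2r // in L.
rewrite -Tq; apply: le_trans (sfB hs _ _) _ => /=.
have -> : z - q = (z - p) + (p - q) by rewrite addrA subrK.
apply: le_trans (sfD hs _ _) _.
apply: le_trans (lerD (sf_le_en hs _) (sf_le_en hs _)) _.
rewrite -/C.
have e1 : en (p - q) <= en (z - p).
  rewrite /en ler_sqrt ?dotxx_ge0 //.
  have -> : p - q = - (q - p) by rewrite opprB.
  by rewrite dotNl dotNr opprK; apply: Hq; rewrite Nz.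
have e2 : en (z - p) = eps * en z.
  have -> : z - p = (- eps) *: z by rewrite /p scalerDl scale1r opprD addrA subrr add0r scaleNr.
  rewrite /en dotZl dotZr mulrA -expr2 sqrtrM; last exact: sqr_ge0.
  by rewrite sqrtr_sqr normrN (ger0_norm (ltW eps0)).
rewrite e2 in e1 *; have := ler_wpM2l C0 e1; lra.
Qed.
End Final.

Theorem mainTheorem15 (R : realType) (n : nat) (N : 'rV[R]_n -> R)
  (hN : is_norm N) (T : {linear 'rV[R]_n -> 'rV[R]_n}) :
  (forall x, ext_ball N x -> preserves_bj_at N T x) ->
  exists lam : R, 0 <= lam /\ forall x, N (T x) = lam * N x.
Proof.
move=> hT.
have [E HE] := choice (good_exists hN T).
have [[c0 c00]|none] := pselect (exists c0 : 'rV[R]_n, c0 != 0).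
  exists (N (T (E c0))); split; first exact: (sf_ge0 (N_semi hN)).
  move=> x; have [->|x0] := eqVneq x 0; first by rewrite linear0 (sf0 (N_semi hN)) mulr0.
  have := unit_case hN hT HE c00 (N_normalize hN x0).
  rewrite linearZ (sfZ (N_semi hN)) ger0_norm; last by rewrite invr_ge0 (sf_ge0 (N_semi hN)).
  move=> H; rewrite -H.
  by rewrite mulrAC mulVf ?mul1r // gt_eqF // N_pos.
exists 0; split => // x.
have -> : x = 0 by apply/eqP; apply/negP => /negP x0; apply: none; exists x.
by rewrite linear0 (sf0 (N_semi hN)) mul0r.
Qed.
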